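(* Let $d\ge 2$. Up to isomorphism there is exactly one primitive $d$-uniform monomial sunflower whose sunflower has a core of size $d-1$. Its multiset of edges consists of $2d+2$ distinct edges, each of multiplicity one: $2d$ petals and $2$ matching edges.
   Context: A hypergraph is $d$-uniform if every edge has exactly $d$ vertices. A sunflower is a $d$-uniform hypergraph with at least two edges (petals) such that any two distinct petals intersect exactly in a fixed nonempty set $C$, the core. A $d$-uniform monomial sunflower is a multihypergraph $\mathcal H$ whose support (its set of distinct edges) consists of two parts: - a sunflower; - a perfect matching of the sunflower's non-core vertices by $d$-element edges disjoint from the core. It is also required that the edge copies of $\mathcal H$ admit a balanced bicolouring, i.e. a red/blue colouring such that every vertex lies in equally many red as blue copies. $\mathcal H$ is primitive if some balanced bicolouring has no nonempty proper balanced sub-multiset with colours kept. *)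

(* Defs.v *)
From mathcomp Require Import all_boot.
Set Implicit Arguments. Unset Strict Implicit. Unset Printing Implicit Defensive.

(* A finite multihypergraph on a finite vertex type T is given by its
   multiplicity function m : {set T} -> nat (m E = number of copies of E). *)
Section MS.
Variable T : finType.
Implicit Types (m r b : {set T} -> nat) (C : {set T}) (P M : {set {set T}}).

Definition ms_support m : {set {set T}} := [set E | 0 < m E].

Definition vertices m : {set T} := cover (ms_support m).

Definition uniform (d : nat) m := forall E, 0 < m E -> #|E| = d.

Definition balanced r b :=
  forall x : T, \sum_(E : {set T} | x \in E) r E = \sum_(E : {set T} | x \in E) b E.

(* A bicolouring of the copies of m: r E of the m E copies of E are red,
   the remaining m E - r E are blue. *)
Definition balanced_bicolouring m r :=
  (forall E, r E <= m E) /\ balanced r (fun E => m E - r E).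

Definition is_sunflower (d : nat) P C :=
  [/\ 2 <= #|P|, C != set0, (forall E, E \in P -> #|E| = d)
    & (forall E1 E2, E1 \in P -> E2 \in P -> E1 != E2 -> E1 :&: E2 = C)].

Definition core_matching (d : nat) P C M :=
  [/\ (forall E, E \in M -> #|E| = d),
      (forall E, E \in M -> [disjoint E & C]),
      (forall E1 E2, E1 \in M -> E2 \in M -> E1 != E2 -> [disjoint E1 & E2])
    & cover M = cover P :\: C].

Definition monomial_sunflower (d : nat) m C P M :=
  [/\ uniform d m, ms_support m = P :|: M, is_sunflower d P C,
      core_matching d P C M & exists r, balanced_bicolouring m r].

Definition primitive m :=
  exists r, balanced_bicolouring m r /\
   forall r' b' : {set T} -> nat,
     (forall E, r' E <= r E) -> (forall E, b' E <= m E - r E) ->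
     balanced r' b' -> (exists E, 0 < r' E + b' E) ->
     forall E, r' E = r E /\ b' E = m E - r E.

Definition prim_ms_core (d : nat) m :=
  primitive m /\ exists C P M, monomial_sunflower d m C P M /\ #|C| = d - 1.

End MS.

Definition mh_isomorphic (T1 T2 : finType) (m1 : {set T1} -> nat)
    (m2 : {set T2} -> nat) :=
  exists f : T1 -> T2,
    [/\ {in vertices m1 &, injective f}, f @: vertices m1 = vertices m2
      & forall E : {set T1}, E \subset vertices m1 -> m2 (f @: E) = m1 E].

(* Main.v *)
Require Import Defs.
From mathcomp Require Import all_boot zify.
Set Implicit Arguments. Unset Strict Implicit. Unset Printing Implicit Defensive.

Lemma sumU (T : finType) (A B : {set T}) (f : T -> nat) : [disjoint A & B] ->
  \sum_(i in A :|: B) f i = \sum_(i in A) f i + \sum_(i in B) f i.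
Proof. by move=> dAB; rewrite -bigU //; apply: eq_bigl => i; rewrite !inE. Qed.

Lemma sum2 (T : finType) (a b : T) (f : T -> nat) : a != b ->
  \sum_(i in [set a; b]) f i = f a + f b.
Proof. by move=> ab; rewrite big_setU1 ?inE // big_set1. Qed.

Lemma sum_supp (T : finType) (S : {set {set T}}) (f : {set T} -> nat) (x : T) :
  (forall E, E \notin S -> f E = 0) ->
  \sum_(E : {set T} | x \in E) f E = \sum_(E in [set E in S | x \in E]) f E.
Proof.
move=> H; rewrite (bigID (fun E => E \in S)) /= [X in _ + X]big1 ?addn0.
  by apply: eq_bigl => E; rewrite !inE andbC.
by move=> E /andP[_ /H].
Qed.

Lemma in_cover (T : finType) (S : {set {set T}}) x :
  reflect (exists2 E, E \in S & x \in E) (x \in cover S).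
Proof. exact: bigcupP. Qed.

Lemma disjP (T : finType) (A B : {set T}) :
  reflect (forall x, x \in A -> x \in B -> False) [disjoint A & B].
Proof.
apply: (iffP idP) => [dAB x xA xB | H]; first by rewrite (disjointFr dAB xA) in xB.
rewrite disjoint_subset; apply/subsetP => x xA; rewrite inE; apply/negP => xB.
exact: H xA xB.
Qed.

Section Model.
#[local] Set Default Proof Using "All".
Variables (T : finType) (d : nat) (C e1 e2 : {set T}).
Hypotheses (hd : 2 <= d) (hC : #|C| = d - 1) (h1 : #|e1| = d) (h2 : #|e2| = d)
  (d1 : [disjoint e1 & C]) (d2 : [disjoint e2 & C]) (d12 : [disjoint e1 & e2]).

Definition pet (y : T) := y |: C.
Definition Q1 := pet @: e1.
Definition Q2 := pet @: e2.
Definition rM (E : {set T}) : nat := (E == e2) + (E \in Q1).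
Definition bM (E : {set T}) : nat := (E == e1) + (E \in Q2).
Definition mM E := rM E + bM E.

Lemma C0 : C != set0.
Proof. by apply/eqP => C0; move: hC; rewrite C0 cards0; case: d hd => [|[]]. Qed.

Lemma notC1 y : y \in e1 -> y \notin C.
Proof. by move=> ye; rewrite (disjointFr d1 ye). Qed.
Lemma notC2 y : y \in e2 -> y \notin C.
Proof. by move=> ye; rewrite (disjointFr d2 ye). Qed.
Lemma not12 y : y \in e1 -> y \notin e2.
Proof. by move=> ye; rewrite (disjointFr d12 ye). Qed.

Lemma pet_inj y z : y \notin C -> pet y = pet z -> y = z.
Proof.
move=> yC e; have : y \in pet z by rewrite -e /pet setU11.
by rewrite /pet in_setU1 (negbTE yC) orbF => /eqP.
Qed.

Lemma card_pet y : y \notin C -> #|pet y| = d.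
Proof. by move=> yC; rewrite /pet cardsU1 yC hC add1n; case: d hd => [|[]]. Qed.

Lemma C_pet y : C \subset pet y.
Proof. exact: subsetU1. Qed.

Lemma inQ1 E : reflect (exists2 y, y \in e1 & E = pet y) (E \in Q1).
Proof. exact: imsetP. Qed.
Lemma inQ2 E : reflect (exists2 y, y \in e2 & E = pet y) (E \in Q2).
Proof. exact: imsetP. Qed.

Lemma ne_C_sub (E : {set T}) : C \subset E -> [disjoint E & C] -> False.
Proof.
move=> sCE dEC; have /set0Pn [c cC] := C0.
by move: (disjointFl dEC cC); rewrite (subsetP sCE c cC).
Qed.

Lemma e1Q E : E \in Q1 :|: Q2 -> (E != e1) && (E != e2).
Proof.
move=> EQ; have sCE : C \subset E.
  by case/setUP: EQ => [/inQ1|/inQ2] [y _ ->]; apply: C_pet.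
apply/andP; split; apply/eqP => e; subst E; exact: ne_C_sub sCE _.
Qed.

Lemma e12 : e1 != e2.
Proof.
apply/eqP => e; move: h1; rewrite e => h; have : e2 != set0.
  by apply/eqP => e0; move: h; rewrite e0 cards0; case: d hd.
case/set0Pn => y ye; move: (not12 (y:=y)); rewrite e ye; by move/(_ isT).
Qed.

Lemma dQ : [disjoint Q1 & Q2].
Proof.
apply/disjP => E /inQ1 [y ye ->] /inQ2 [z ze] /(pet_inj (notC1 ye)) yz.
by move: (not12 ye); rewrite yz ze.
Qed.

Lemma card_Q1 : #|Q1| = d.
Proof. by rewrite card_in_imset // => y z ye _; apply: pet_inj (notC1 ye). Qed.
Lemma card_Q2 : #|Q2| = d.
Proof. by rewrite card_in_imset // => y z ye _; apply: pet_inj (notC2 ye). Qed.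

Definition SM := e1 |: (e2 |: (Q1 :|: Q2)).

Lemma mM_supp E : (0 < mM E) = (E \in SM).
Proof.
rewrite /mM /rM /bM /SM !inE.
by case: (E == e1); case: (E == e2); case: (E \in Q1); case: (E \in Q2).
Qed.


Lemma petQ1 y : y \in e1 -> pet y \in Q1. Proof. exact: imset_f. Qed.
Lemma petQ2 y : y \in e2 -> pet y \in Q2. Proof. exact: imset_f. Qed.
Lemma in_pet x y : x \in pet y = (x == y) || (x \in C).
Proof. by rewrite /pet in_setU1. Qed.

Lemma supp0 (f : {set T} -> nat) : (forall E, f E <= mM E) ->
  forall E, E \notin SM -> f E = 0.
Proof. by move=> H E; rewrite -mM_supp -leqNgt leqn0 => /eqP h; move: (H E); rewrite h leqn0 => /eqP. Qed.

Lemma sum_C (f : {set T} -> nat) x : (forall E, f E <= mM E) -> x \in C ->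
  \sum_(E : {set T} | x \in E) f E =
  \sum_(y in e1) f (pet y) + \sum_(y in e2) f (pet y).
Proof.
move=> H xC; rewrite (sum_supp (S := SM)); last exact: supp0.
have -> : [set E in SM | x \in E] = Q1 :|: Q2.
  apply/setP => E; rewrite /SM !inE; apply/idP/idP.
    case/andP => /or4P [/eqP->|/eqP->|EQ|EQ] xE.
    - by rewrite (disjointFl d1 xC) in xE.
    - by rewrite (disjointFl d2 xC) in xE.
    - by rewrite EQ.
    - by rewrite EQ orbT.
  case/orP => [/inQ1|/inQ2] [y ye ->]; rewrite in_pet xC orbT andbT.
    by rewrite petQ1 ?orbT.
  by rewrite petQ2 ?orbT.
rewrite sumU ?dQ // /Q1 /Q2 !big_imset //.
  by move=> y z ye _; apply: pet_inj (notC2 ye).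
by move=> y z ye _; apply: pet_inj (notC1 ye).
Qed.

Lemma sum_e1 (f : {set T} -> nat) x : (forall E, f E <= mM E) -> x \in e1 ->
  \sum_(E : {set T} | x \in E) f E = f e1 + f (pet x).
Proof.
move=> H xe; rewrite (sum_supp (S := SM)); last exact: supp0.
have -> : [set E in SM | x \in E] = [set e1; pet x].
  apply/setP => E; rewrite /SM !inE; apply/idP/idP.
    case/andP => /or4P [/eqP->|/eqP->|/inQ1 [y ye ->]|/inQ2 [y ye ->]].
    - by rewrite eqxx.
    - by rewrite (negbTE (not12 xe)).
    - rewrite in_pet (negbTE (notC1 xe)) orbF => /eqP ->; by rewrite eqxx orbT.
    - rewrite in_pet (negbTE (notC1 xe)) orbF => /eqP xy; subst y.
      by rewrite (negbTE (not12 xe)) in ye.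
  case/orP => /eqP ->; first by rewrite eqxx xe.
  by rewrite petQ1 // !orbT in_pet eqxx.
have /andP [ne1 ne2] : (pet x != e1) && (pet x != e2).
  by apply: e1Q; rewrite inE petQ1.
by rewrite sum2 // eq_sym.
Qed.

Lemma sum_e2 (f : {set T} -> nat) x : (forall E, f E <= mM E) -> x \in e2 ->
  \sum_(E : {set T} | x \in E) f E = f e2 + f (pet x).
Proof.
move=> H xe; rewrite (sum_supp (S := SM)); last exact: supp0.
have xe1 : x \notin e1 by apply/negP => /not12; rewrite xe.
have -> : [set E in SM | x \in E] = [set e2; pet x].
  apply/setP => E; rewrite /SM !inE; apply/idP/idP.
    case/andP => /or4P [/eqP->|/eqP->|/inQ1 [y ye ->]|/inQ2 [y ye ->]].
    - by rewrite (negbTE xe1).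
    - by rewrite eqxx.
    - rewrite in_pet (negbTE (notC2 xe)) orbF => /eqP xy; subst y.
      by rewrite (negbTE xe1) in ye.
    - rewrite in_pet (negbTE (notC2 xe)) orbF => /eqP ->; by rewrite eqxx orbT.
  case/orP => /eqP ->; first by rewrite eqxx xe orbT.
  by rewrite petQ2 // ?orbT in_pet eqxx ?orbT.
have /andP [ne1 ne2] : (pet x != e1) && (pet x != e2).
  by apply: e1Q; rewrite inE petQ2 ?orbT.
by rewrite sum2 // eq_sym.
Qed.

Lemma sum_out (f : {set T} -> nat) x : (forall E, f E <= mM E) ->
  x \notin C -> x \notin e1 -> x \notin e2 ->
  \sum_(E : {set T} | x \in E) f E = 0.
Proof.
move=> H xC x1 x2; rewrite (sum_supp (S := SM)); last exact: supp0.
rewrite big1 // => E; rewrite /SM !inE.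
case/andP => /or4P [/eqP->|/eqP->|/inQ1 [y ye ->]|/inQ2 [y ye ->]].
- by rewrite (negbTE x1).
- by rewrite (negbTE x2).
- rewrite in_pet (negbTE xC) orbF => /eqP xy; subst y; by rewrite ye in x1.
- rewrite in_pet (negbTE xC) orbF => /eqP xy; subst y; by rewrite ye in x2.
Qed.

Lemma e1_notQ : e1 \notin Q1 :|: Q2.
Proof. by apply/negP => /e1Q; rewrite eqxx. Qed.
Lemma e2_notQ : e2 \notin Q1 :|: Q2.
Proof. by apply/negP => /e1Q; rewrite eqxx andbF. Qed.
Lemma e1_notQ1 : e1 \notin Q1.
Proof. by apply/negP => q; move: e1_notQ; rewrite inE q. Qed.
Lemma e1_notQ2 : e1 \notin Q2.
Proof. by apply/negP => q; move: e1_notQ; rewrite inE q orbT. Qed.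
Lemma e2_notQ1 : e2 \notin Q1.
Proof. by apply/negP => q; move: e2_notQ; rewrite inE q. Qed.
Lemma e2_notQ2 : e2 \notin Q2.
Proof. by apply/negP => q; move: e2_notQ; rewrite inE q orbT. Qed.

Lemma rM_e1 : rM e1 = 0.
Proof. by rewrite /rM (negbTE e12) (negbTE e1_notQ1). Qed.
Lemma rM_e2 : rM e2 = 1.
Proof. by rewrite /rM eqxx (negbTE e2_notQ1). Qed.
Lemma bM_e1 : bM e1 = 1.
Proof. by rewrite /bM eqxx (negbTE e1_notQ2). Qed.
Lemma bM_e2 : bM e2 = 0.
Proof. by rewrite /bM eq_sym (negbTE e12) (negbTE e2_notQ2). Qed.

Lemma pet_ne y : y \in e1 :|: e2 -> (pet y != e1) && (pet y != e2).
Proof.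
move=> ye; apply: e1Q; apply/setUP.
by case/setUP: ye => ye; [left; exact: petQ1 | right; exact: petQ2].
Qed.

Lemma rM_p1 y : y \in e1 -> rM (pet y) = 1.
Proof.
move=> ye; have /andP [_ n2] : (pet y != e1) && (pet y != e2) by apply: pet_ne; rewrite inE ye ?orbT.
by rewrite /rM (negbTE n2) petQ1.
Qed.
Lemma bM_p1 y : y \in e1 -> bM (pet y) = 0.
Proof.
move=> ye; have /andP [n1 _] : (pet y != e1) && (pet y != e2) by apply: pet_ne; rewrite inE ye ?orbT.
rewrite /bM (negbTE n1); case: (boolP (pet y \in Q2)) => // q.
by have := disjointFr dQ (petQ1 ye); rewrite q.
Qed.
Lemma rM_p2 y : y \in e2 -> rM (pet y) = 0.
Proof.
move=> ye; have /andP [_ n2] : (pet y != e1) && (pet y != e2) by apply: pet_ne; rewrite inE ye ?orbT.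
rewrite /rM (negbTE n2); case: (boolP (pet y \in Q1)) => // q.
by have := disjointFr dQ q; rewrite petQ2.
Qed.
Lemma bM_p2 y : y \in e2 -> bM (pet y) = 1.
Proof.
move=> ye; have /andP [n1 _] : (pet y != e1) && (pet y != e2) by apply: pet_ne; rewrite inE ye ?orbT.
by rewrite /bM (negbTE n1) petQ2.
Qed.

Lemma rM_le E : rM E <= mM E. Proof. exact: leq_addr. Qed.
Lemma bM_le E : bM E <= mM E. Proof. exact: leq_addl. Qed.

Lemma sum_const_e (A : {set T}) (g : T -> nat) k : (forall y, y \in A -> g y = k) ->
  \sum_(y in A) g y = #|A| * k.
Proof. by move=> H; rewrite (eq_bigr (fun _ => k)) // sum_nat_const. Qed.

Lemma bal_M : balanced rM bM.
Proof.
move=> x; case: (boolP (x \in C)) => xC.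
  rewrite !sum_C //; try exact: rM_le; try exact: bM_le.
  rewrite (sum_const_e (k := 1) (g := fun y => rM (pet y))); last exact: rM_p1.
  rewrite (sum_const_e (k := 0) (g := fun y => rM (pet y))); last exact: rM_p2.
  rewrite (sum_const_e (k := 0) (g := fun y => bM (pet y))); last exact: bM_p1.
  rewrite (sum_const_e (k := 1) (g := fun y => bM (pet y))); last exact: bM_p2.
  by rewrite h1 h2 !muln0 !muln1 addn0.
case: (boolP (x \in e1)) => x1.
  by rewrite !sum_e1 // ?rM_e1 ?bM_e1 ?rM_p1 ?bM_p1 //; try exact: rM_le; exact: bM_le.
case: (boolP (x \in e2)) => x2.
  by rewrite !sum_e2 // ?rM_e2 ?bM_e2 ?rM_p2 ?bM_p2 //; try exact: rM_le; exact: bM_le.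
by rewrite !sum_out //; try exact: rM_le; exact: bM_le.
Qed.

Lemma mMrM E : mM E - rM E = bM E.
Proof. by rewrite /mM addKn. Qed.

Lemma bbM : balanced_bicolouring mM rM.
Proof.
split; first exact: rM_le.
move=> x; rewrite bal_M; apply: eq_bigr => E _; by rewrite mMrM.
Qed.

Lemma rM0 E : E != e2 -> E \notin Q1 -> rM E = 0.
Proof. by move=> /negbTE a /negbTE b; rewrite /rM a b. Qed.
Lemma bM0 E : E != e1 -> E \notin Q2 -> bM E = 0.
Proof. by move=> /negbTE a /negbTE b; rewrite /bM a b. Qed.

Lemma prim_M : primitive mM.
Proof.
exists rM; split; first exact: bbM.
move=> r b hr hb bal [E0 ne].
have hb' : forall E, b E <= bM E by move=> E; rewrite -mMrM.
have rle : forall E, r E <= mM E by move=> E; apply: leq_trans (hr E) (rM_le E).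
have ble : forall E, b E <= mM E by move=> E; apply: leq_trans (hb' E) (bM_le E).
have z : forall n, n <= 0 -> n = 0 by move=> n; rewrite leqn0 => /eqP.
have A : forall y, y \in e1 -> r (pet y) = b e1.
  move=> y ye; move: (bal y); rewrite !sum_e1 //.
  by rewrite (z _ (leq_trans (hr e1) (eq_leq rM_e1))) (z _ (leq_trans (hb' _) (eq_leq (bM_p1 ye)))) addn0.
have B : forall y, y \in e2 -> b (pet y) = r e2.
  move=> y ye; move: (bal y); rewrite !sum_e2 //.
  by rewrite (z _ (leq_trans (hb' e2) (eq_leq bM_e2))) (z _ (leq_trans (hr _) (eq_leq (rM_p2 ye)))) addn0 => ->.
have /set0Pn [c cC] := C0.
have tt : b e1 = r e2.
  move: (bal c); rewrite !sum_C //.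
  rewrite (sum_const_e (k := b e1) (g := fun y => r (pet y))) //.
  rewrite (sum_const_e (k := 0) (g := fun y => r (pet y))); last first.
    by move=> y ye; apply: z; rewrite -(rM_p2 ye).
  rewrite (sum_const_e (k := 0) (g := fun y => b (pet y))); last first.
    by move=> y ye; apply: z; rewrite -(bM_p1 ye).
  rewrite (sum_const_e (k := r e2) (g := fun y => b (pet y))) //.
  rewrite h1 h2 !muln0 addn0 => /eqP; rewrite eqn_pmul2l; first by move/eqP.
  by case: d hd.
have Hr : forall E, r E = r e2 * rM E.
  move=> E; case: (eqVneq E e2) => [->|n2]; first by rewrite rM_e2 muln1.
  case: (boolP (E \in Q1)) => [/inQ1 [y ye ->]|nq]; first by rewrite rM_p1 // muln1 A.
  by rewrite rM0 // muln0; apply: z; rewrite -(rM0 n2 nq).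
have Hb : forall E, b E = r e2 * bM E.
  move=> E; case: (eqVneq E e1) => [->|n1]; first by rewrite bM_e1 muln1.
  case: (boolP (E \in Q2)) => [/inQ2 [y ye ->]|nq]; first by rewrite bM_p2 // muln1 B.
  by rewrite bM0 // muln0; apply: z; rewrite -(bM0 n1 nq).
have t1 : r e2 <= 1 by rewrite -rM_e2.
move: ne; rewrite Hr Hb; case E2: (r e2) t1 => [|[|//]] _; first by rewrite !mul0n.
by move=> _ E; rewrite Hr Hb mMrM E2 !mul1n.
Qed.

Lemma cover_M x : (x \in cover [set e1; e2]) = (x \in e1) || (x \in e2).
Proof.
apply/in_cover/idP => [[E] |].
  by rewrite !inE => /orP [] /eqP -> ->; rewrite ?orbT.
case/orP => xe; [exists e1 | exists e2]; by rewrite ?inE ?eqxx ?orbT.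
Qed.

Lemma cover_P x : (x \in cover (Q1 :|: Q2) :\: C) = (x \in e1) || (x \in e2).
Proof.
rewrite inE; apply/andP/idP => [[xC /in_cover [E]]|].
  case/setUP => [/inQ1|/inQ2] [y ye ->]; rewrite in_pet (negbTE xC) orbF => /eqP ->;
  by rewrite ye ?orbT.
case/orP => xe.
  split; first exact: notC1.
  by apply/in_cover; exists (pet x); rewrite ?inE ?petQ1 ?in_pet ?eqxx.
split; first exact: notC2.
by apply/in_cover; exists (pet x); rewrite ?inE ?petQ2 ?orbT ?in_pet ?eqxx.
Qed.

Lemma ms_M : monomial_sunflower d mM C (Q1 :|: Q2) [set e1; e2].
Proof.
split.
- move=> E; rewrite mM_supp /SM !inE => /or4P [/eqP->|/eqP->|/inQ1[y ye ->]|/inQ2[y ye ->]] //.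
    exact: card_pet (notC1 ye).
  exact: card_pet (notC2 ye).
- apply/setP => E; rewrite /ms_support !inE mM_supp /SM !inE.
  by case: (E == e1); case: (E == e2); case: (E \in Q1); case: (E \in Q2).
- split.
  + by apply: leq_trans hd _; rewrite -card_Q1; apply: subset_leq_card; apply: subsetUl.
  + exact: C0.
  + by move=> E /setUP [/inQ1|/inQ2] [y ye ->]; [exact: card_pet (notC1 ye) | exact: card_pet (notC2 ye)].
  + move=> E1 E2 q1 q2 ne.
    have [y [yC ey]] : exists y, y \notin C /\ E1 = pet y.
      by case/setUP: q1 => [/inQ1|/inQ2] [y ye ->]; exists y; split; rewrite // ?(notC1 ye) ?(notC2 ye).
    have [z [zC ez]] : exists z, z \notin C /\ E2 = pet z.
      by case/setUP: q2 => [/inQ1|/inQ2] [z ze ->]; exists z; split; rewrite // ?(notC1 ze) ?(notC2 ze).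
    subst E1 E2; apply/setP => x; rewrite inE !in_pet.
    case: (boolP (x \in C)) => xC; first by rewrite !orbT.
    rewrite !orbF; apply/negP => /andP [/eqP xy /eqP xz].
    by move: ne; rewrite -xy -xz eqxx.
- split.
  + by move=> E; rewrite !inE => /orP [] /eqP ->.
  + by move=> E; rewrite !inE => /orP [] /eqP ->.
  + move=> E1 E2; rewrite !inE => /orP [] /eqP -> /orP [] /eqP ->; rewrite ?eqxx //.
    by rewrite disjoint_sym.
  + by apply/setP => x; rewrite cover_M cover_P.
- by exists rM; exact: bbM.
Qed.

Lemma prim_core_M : prim_ms_core d mM.
Proof. split; first exact: prim_M. by exists C, (Q1 :|: Q2), [set e1; e2]; split; [exact: ms_M|]. Qed.

Lemma mM_1 E : E \in SM -> mM E = 1.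
Proof.
rewrite /SM !inE /mM /rM /bM.
case: (eqVneq E e1) => [->|n1] /=.
  by rewrite (negbTE e12) (negbTE e1_notQ1) (negbTE e1_notQ2).
case: (eqVneq E e2) => [->|n2] /=.
  by rewrite (negbTE e2_notQ1) (negbTE e2_notQ2).
case/orP => q.
  by rewrite q; case: (boolP (E \in Q2)) => // q2; have := disjointFr dQ q; rewrite q2.
by rewrite q; case: (boolP (E \in Q1)) => // q1; have := disjointFr dQ q1; rewrite q.
Qed.

Lemma cover_SM x : (x \in cover SM) = [|| x \in C, x \in e1 | x \in e2].
Proof.
apply/in_cover/idP => [[E] |].
  rewrite /SM !inE => /or4P [/eqP->|/eqP->|/inQ1 [y ye ->]|/inQ2 [y ye ->]] xE;
    rewrite ?xE ?orbT //; move: xE; rewrite in_pet => /orP [/eqP ->|->]; by rewrite ?ye ?orbT.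
case/or3P => xE.
- have : 0 < #|e1| by rewrite h1; case: d hd.
  rewrite card_gt0 => /set0Pn [y ye]; exists (pet y); last by rewrite in_pet xE orbT.
  by rewrite /SM !inE petQ1 ?orbT.
- by exists e1; rewrite // /SM !inE eqxx.
- by exists e2; rewrite // /SM !inE eqxx orbT.
Qed.

Lemma vertices_M (m : {set T} -> nat) : (forall E, m E = mM E) -> vertices m = (C :|: e1) :|: e2.
Proof.
move=> H; rewrite /vertices; have -> : ms_support m = SM.
  by apply/setP => E; rewrite inE H mM_supp.
by apply/setP => x; rewrite cover_SM !inE orbA.
Qed.

End Model.

Lemma cardU_disj (T : finType) (A B : {set T}) : [disjoint A & B] -> #|A :|: B| = #|A| + #|B|.
Proof. by move=> dAB; rewrite -!sum1_card sumU. Qed.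

Section Gen.
#[local] Set Default Proof Using "All".
Variables (T : finType) (d : nat) (m : {set T} -> nat) (C : {set T}) (P M : {set {set T}}).
Hypotheses (hd : 2 <= d) (hu : uniform d m) (hsupp : ms_support m = P :|: M)
  (hsf : is_sunflower d P C) (hcm : core_matching d P C M) (hC : #|C| = d - 1).

Lemma G_C0 : C != set0. Proof. by case: hsf. Qed.
Lemma G_Pcard E : E \in P -> #|E| = d. Proof. by case: hsf => _ _ H _; apply: H. Qed.
Lemma G_Mcard E : E \in M -> #|E| = d. Proof. by case: hcm => H _ _ _; apply: H. Qed.
Lemma G_MC E : E \in M -> [disjoint E & C]. Proof. by case: hcm => _ H _ _; apply: H. Qed.
Lemma G_MM E1 E2 : E1 \in M -> E2 \in M -> E1 != E2 -> [disjoint E1 & E2].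
Proof. by case: hcm => _ _ H _; apply: H. Qed.
Lemma G_cover : cover M = cover P :\: C. Proof. by case: hcm. Qed.

Lemma G_PC E : E \in P -> C \subset E.
Proof.
move=> EP; case: hsf => h2 _ _ hI.
have : 0 < #|P :\ E| by rewrite (cardsD1 E P) EP in h2; rewrite -ltnS.
rewrite card_gt0 => /set0Pn [E' /setD1P [nE E'P]].
by rewrite -(hI E E' EP E'P); [apply: subsetIl | rewrite eq_sym].
Qed.

Lemma G_pet E y : E \in P -> y \in E -> y \notin C -> E = pet C y.
Proof.
move=> EP yE yC; apply/eqP; rewrite eq_sym eqEcard.
rewrite /pet subUset sub1set yE G_PC //= (G_Pcard EP) cardsU1 yC hC; lia.
Qed.

Lemma G_Py E : E \in P -> exists2 y, y \in E & y \notin C.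
Proof.
move=> EP; apply/subsetPn/negP => sEC.
have := subset_leq_card sEC; rewrite (G_Pcard EP) hC; lia.
Qed.

Lemma G_yM y e : e \in M -> y \in e -> y \notin C /\ pet C y \in P.
Proof.
move=> eM ye; have yC : y \notin C by rewrite (disjointFr (G_MC eM) ye).
split => //.
have : y \in cover M by apply/in_cover; exists e.
rewrite G_cover inE (negbTE yC) /= => /in_cover [E EP yE].
by rewrite -(G_pet EP yE yC).
Qed.

Lemma G_Pe E : E \in P -> exists y e, [/\ e \in M, y \in e & E = pet C y].
Proof.
move=> EP; have [y yE yC] := G_Py EP.
have : y \in cover M by rewrite G_cover inE yC; apply/in_cover; exists E.
case/in_cover => e eM ye; exists y, e; split => //; exact: G_pet.
Qed.

Lemma G_Muniq e e' y : e \in M -> e' \in M -> y \in e -> y \in e' -> e = e'.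
Proof.
move=> eM e'M ye ye'; apply/eqP; apply/negP => /negP ne.
by have := disjointFr (G_MM eM e'M ne) ye; rewrite ye'.
Qed.

Lemma G_PM E : E \in P -> E \in M -> False.
Proof.
move=> EP EM; have /set0Pn [c cC] := G_C0.
by have := disjointFl (G_MC EM) cC; rewrite (subsetP (G_PC EP) c cC).
Qed.

Lemma G_supp0 (f : {set T} -> nat) : (forall E, f E <= m E) ->
  forall E, E \notin ms_support m -> f E = 0.
Proof.
move=> H E; rewrite inE -leqNgt leqn0 => /eqP h.
by move: (H E); rewrite h leqn0 => /eqP.
Qed.

Lemma G_sum_y (f : {set T} -> nat) e y : (forall E, f E <= m E) -> e \in M -> y \in e ->
  \sum_(E : {set T} | y \in E) f E = f e + f (pet C y).
Proof.
move=> H eM ye; rewrite (sum_supp (S := ms_support m)); last exact: G_supp0.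
have [yC pP] := G_yM eM ye.
have -> : [set E in ms_support m | y \in E] = [set e; pet C y].
  apply/setP => E; rewrite hsupp !inE; apply/idP/idP.
    case/andP => /orP [EP|EM] yE.
      by rewrite (G_pet EP yE yC) eqxx orbT.
    by rewrite (G_Muniq EM eM yE ye) eqxx.
  by case/orP => /eqP ->; rewrite ?eM ?pP ?orbT ?ye // /pet setU11.
rewrite sum2 //; apply/eqP => ee; apply: (G_PM pP); by rewrite -ee.
Qed.

Lemma G_sum_c (f : {set T} -> nat) c : (forall E, f E <= m E) -> c \in C ->
  \sum_(E : {set T} | c \in E) f E = \sum_(E in P) f E.
Proof.
move=> H cC; rewrite (sum_supp (S := ms_support m)); last exact: G_supp0.
apply: eq_bigl => E; rewrite hsupp !inE; apply/idP/idP.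
  case/andP => /orP [//|EM] cE.
  by have := disjointFl (G_MC EM) cC; rewrite cE.
by move=> EP; rewrite EP (subsetP (G_PC EP) c cC).
Qed.

Lemma G_exlt (r b : {set T} -> nat) :
  (forall e y, e \in M -> y \in e -> r e + r (pet C y) = b e + b (pet C y)) ->
  \sum_(E in P) r E = \sum_(E in P) b E ->
  (exists2 e, e \in M & r e < b e) -> exists2 e, e \in M & b e < r e.
Proof.
move=> Hid Hs [e0 e0M lt0].
case: (boolP [exists e in M, b e < r e]) => [/exists_inP [e eM lt] | /exists_inP nex].
  by exists e.
exfalso.
have le : forall E, E \in P -> b E <= r E.
  move=> E EP; have [y [e [eM ye ->]]] := G_Pe EP.
  have := Hid e y eM ye; have : ~~ (b e < r e) by apply/negP => h; apply: nex; exists e.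
  rewrite -leqNgt; lia.
have S0 : \sum_(i in P) (r i - b i) == 0 by rewrite sumnB // Hs subnn.
have eq : forall E, E \in P -> b E = r E.
  move=> E EP; move: S0; rewrite sum_nat_eq0 => /forallP /(_ E) /implyP /(_ EP).
  rewrite subn_eq0; have := le _ EP; lia.
have : 0 < #|e0| by rewrite (G_Mcard e0M); lia.
rewrite card_gt0 => /set0Pn [y ye].
have [_ pP] := G_yM e0M ye.
have := Hid e0 y e0M ye; have := eq _ pP; lia.
Qed.

Lemma G_struct : primitive m -> exists e1 e2 : {set T},
  [/\ [/\ #|e1| = d, #|e2| = d, [disjoint e1 & C], [disjoint e2 & C] & [disjoint e1 & e2]],
      (forall E, m E = mM C e1 e2 E), P = Q1 C e1 :|: Q2 C e2 & M = [set e1; e2]].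
Proof.
case=> r [[rle bal] prim].
have ble : forall E, m E - r E <= m E by move=> E; apply: leq_subr.
have Hid : forall e y, e \in M -> y \in e ->
    r e + r (pet C y) = (m e - r e) + (m (pet C y) - r (pet C y)).
  move=> e y eM ye; have := bal y.
  by rewrite (G_sum_y rle eM ye) (G_sum_y (f := fun E => m E - r E) ble eM ye).
have /set0Pn [c cC] := G_C0.
have Hs : \sum_(E in P) r E = \sum_(E in P) (m E - r E).
  by have := bal c; rewrite (G_sum_c rle cC) (G_sum_c (f := fun E => m E - r E) ble cC).
have insupp : forall E, E \in P :|: M -> 0 < m E.
  by move=> E; rewrite -hsupp inE.
case: (boolP [exists e in M, r e != m e - r e]) => [/exists_inP [e0 e0M ne0] | /exists_inP nex]; last first.
  exfalso.
  have /set0Pn [p pP] : P != set0.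
    by case: hsf => h2 _ _ _; rewrite -card_gt0; apply: leq_trans h2.
  have [y [e [eM ye pe]]] := G_Pe pP.
  have req : r e = m e - r e.
    by apply/eqP; apply/negPn/negP => ne; apply: nex; exists e.
  have Hp := Hid e y eM ye; rewrite -pe req in Hp.
  have mp : 0 < m p by apply: insupp; rewrite inE pP.
  have := prim (fun E => (E == p) : nat) (fun E => (E == p) : nat).
  case/(_ _ _ _ _ e).
  - by move=> E; case: (eqVneq E p) => [->|] //=; lia.
  - by move=> E; case: (eqVneq E p) => [->|] //=; lia.
  - by [].
  - by exists p; rewrite eqxx.
  have ep : e != p by apply/eqP => ep; apply: (G_PM pP); rewrite -ep.
  rewrite (negbTE ep) /= => r0 b0.
  have := insupp e; rewrite inE eM orbT => /(_ isT); lia.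
have Ex1 := G_exlt Hid Hs.
have Ex2 : (exists2 e, e \in M & m e - r e < r e) -> exists2 e, e \in M & r e < m e - r e.
  exact: (G_exlt (r := fun E => m E - r E) (b := r) (fun e y eM ye => esym (Hid e y eM ye)) (esym Hs)).
have [[e1 e1M lt1] [e2 e2M lt2]] :
    (exists2 e, e \in M & r e < m e - r e) /\ (exists2 e, e \in M & m e - r e < r e).
  case: (ltngtP (r e0) (m e0 - r e0)) => h.
  - have X : exists2 e, e \in M & r e < m e - r e by exists e0.
    by split => //; apply: Ex1.
  - have X : exists2 e, e \in M & m e - r e < r e by exists e0.
    by split => //; apply: Ex2.
  - by rewrite -h eqxx in ne0.
have n12 : e1 != e2 by apply/eqP => e; subst e2; lia.
have d12 := G_MM e1M e2M n12.
have h1 := G_Mcard e1M; have h2 := G_Mcard e2M.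
have d1 := G_MC e1M; have d2 := G_MC e2M.
exists e1, e2.
have rl : forall E, rM C e1 e2 E <= r E.
  move=> E; case: (eqVneq E e2) => [->|n2].
    by rewrite (rM_e2 hd hC h1 h2 d1 d2 d12); lia.
  case: (boolP (E \in Q1 C e1)) => [/imsetP [y ye ->] | nq].
    by rewrite (rM_p1 hd hC h1 h2 d1 d2 d12 ye); have := Hid e1 y e1M ye; lia.
  by rewrite (rM0 hd hC h1 h2 d1 d2 d12 n2 nq).
have bl : forall E, bM C e1 e2 E <= m E - r E.
  move=> E; case: (eqVneq E e1) => [->|n1].
    by rewrite (bM_e1 hd hC h1 h2 d1 d2 d12); lia.
  case: (boolP (E \in Q2 C e2)) => [/imsetP [y ye ->] | nq].
    by rewrite (bM_p2 hd hC h1 h2 d1 d2 d12 ye); have := Hid e2 y e2M ye; lia.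
  by rewrite (bM0 hd hC h1 h2 d1 d2 d12 n1 nq).
have H := prim _ _ rl bl (bal_M hd hC h1 h2 d1 d2 d12).
have ne : exists E, 0 < rM C e1 e2 E + bM C e1 e2 E.
  by exists e2; rewrite (rM_e2 hd hC h1 h2 d1 d2 d12).
move: (H ne) => {}H.
have mE : forall E, m E = mM C e1 e2 E.
  move=> E; have [a b] := H E; rewrite /mM a b subnKC //.
have inSM : forall E, E \in P :|: M -> E \in SM C e1 e2.
  move=> E EPM; rewrite -(mM_supp hd hC h1 h2 d1 d2 d12) -mE; exact: insupp.
have QP1 : forall E, E \in Q1 C e1 -> E \in P.
  by move=> E /imsetP [y ye ->]; case: (G_yM e1M ye).
have QP2 : forall E, E \in Q2 C e2 -> E \in P.
  by move=> E /imsetP [y ye ->]; case: (G_yM e2M ye).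
split => //.
- apply/setP => E; apply/idP/idP => [EP | ].
    have := inSM E; rewrite inE EP => /(_ isT); rewrite /SM !inE.
    case/or4P => [/eqP ee|/eqP ee|->|->]; rewrite ?orbT //; exfalso; apply: (G_PM EP); by rewrite ee.
  by case/setUP; [apply: QP1 | apply: QP2].
- apply/setP => E; apply/idP/idP => [EM | ].
    have := inSM E; rewrite inE EM orbT => /(_ isT); rewrite /SM !inE.
    case/or4P => [/eqP->|/eqP->|q|q]; rewrite ?inE ?eqxx ?orbT //; exfalso; apply: (G_PM _ EM); [exact: QP1 | exact: QP2].
  by rewrite !inE => /orP [] /eqP ->.
Qed.

End Gen.

Lemma bij_ex (T1 T2 : finType) (y0 : T2) (A : {set T1}) (B : {set T2}) :
  #|A| = #|B| -> exists g : T1 -> T2, {in A &, injective g} /\ g @: A = B.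
Proof.
move=> hAB; pose g x := nth y0 (enum B) (index x (enum A)).
have ilt : forall z, z \in A -> index z (enum A) < size (enum B).
  by move=> z zA; rewrite -cardE -hAB cardE index_mem mem_enum.
have inj : {in A &, injective g}.
  move=> x x' xA x'A /eqP; rewrite /g nth_uniq ?enum_uniq ?ilt //.
  move/eqP => ei; apply: (index_inj x (s := enum A)) => //; by rewrite mem_enum.
exists g; split => //; apply/eqP; rewrite eqEcard card_in_imset // hAB leqnn andbT.
apply/subsetP => y /imsetP [x xA ->]; rewrite -mem_enum /g mem_nth // ilt //.
Qed.

Lemma glue (T1 T2 : finType) (A1 A2 : {set T1}) (B1 B2 : {set T2}) (g1 g2 : T1 -> T2) :
  [disjoint B1 & B2] -> {in A1 &, injective g1} -> g1 @: A1 = B1 ->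
  {in A2 &, injective g2} -> g2 @: A2 = B2 ->
  exists f : T1 -> T2, [/\ {in A1 :|: A2 &, injective f}, {in A1, f =1 g1} & {in A2 :\: A1, f =1 g2}].
Proof.
move=> dB i1 e1 i2 e2; exists (fun x => if x \in A1 then g1 x else g2 x); split; last 2 first.
- by move=> x ->.
- by move=> x; rewrite inE => /andP [/negbTE -> _].
move=> x x'; rewrite !inE.
have m1 : forall z, z \in A1 -> g1 z \in B1 by move=> z zA; rewrite -e1 imset_f.
have m2 : forall z, z \in A2 -> g2 z \in B2 by move=> z zA; rewrite -e2 imset_f.
case: (boolP (x \in A1)) => x1; case: (boolP (x' \in A1)) => x'1 /= xA x'A.
- exact: i1.
- move=> ee; have := m1 _ x1; rewrite ee => h.
  by have := disjointFr dB h; rewrite m2.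
- move=> ee; have := m1 _ x'1; rewrite -ee => h.
  by have := disjointFr dB h; rewrite m2.
- exact: i2.
Qed.

Lemma imset_injV (T1 T2 : finType) (F : T1 -> T2) (V A B : {set T1}) :
  {in V &, injective F} -> A \subset V -> B \subset V -> (F @: A == F @: B) = (A == B).
Proof.
move=> inj sA sB; apply/eqP/eqP => [h|->//]; apply/setP => x; apply/idP/idP => xA.
  have : F x \in F @: B by rewrite -h imset_f.
  case/imsetP => x' x'B ex.
  by rewrite (inj x x' (subsetP sA x xA) (subsetP sB x' x'B) ex).
have : F x \in F @: A by rewrite h imset_f.
case/imsetP => x' x'A ex.
by rewrite (inj x x' (subsetP sB x xA) (subsetP sA x' x'A) ex).
Qed.

Lemma imset_pet (T1 T2 : finType) (F : T1 -> T2) (V C1 A1 E : {set T1}) (C2 A2 : {set T2}) :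
  {in V &, injective F} -> C1 \subset V -> A1 \subset V -> E \subset V ->
  F @: C1 = C2 -> F @: A1 = A2 ->
  (F @: E \in pet C2 @: A2) = (E \in pet C1 @: A1).
Proof.
move=> inj sC sA sE eC eA.
have Fp : forall y, F @: pet C1 y = pet C2 (F y) by move=> y; rewrite /pet imsetU1 eC.
have sp : forall y, y \in A1 -> pet C1 y \subset V.
  by move=> y yA; rewrite /pet subUset sub1set (subsetP sA y yA) sC.
apply/imsetP/imsetP => [[z] | [y yA ->]].
  rewrite -eA => /imsetP [y yA ->]; rewrite -Fp => /eqP.
  by rewrite (imset_injV inj sE (sp y yA)) => /eqP ->; exists y.
by exists (F y); rewrite ?Fp // -eA imset_f.
Qed.

Lemma iso_M (T1 T2 : finType) d (C1 e1 f1 : {set T1}) (C2 e2 f2 : {set T2})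
  (hd : 2 <= d) (hC1 : #|C1| = d - 1) (h11 : #|e1| = d) (h12 : #|f1| = d)
  (d11 : [disjoint e1 & C1]) (d12 : [disjoint f1 & C1]) (d112 : [disjoint e1 & f1])
  (hC2 : #|C2| = d - 1) (h21 : #|e2| = d) (h22 : #|f2| = d)
  (d21 : [disjoint e2 & C2]) (d22 : [disjoint f2 & C2]) (d212 : [disjoint e2 & f2])
  (m1 : {set T1} -> nat) (m2 : {set T2} -> nat)
  (H1 : forall E, m1 E = mM C1 e1 f1 E) (H2 : forall E, m2 E = mM C2 e2 f2 E) :
  mh_isomorphic m1 m2.
Proof.
have /set0Pn [y0 _] : e2 != set0 by rewrite -card_gt0 h21; lia.
have [gC [iC eC]] := bij_ex y0 (A := C1) (B := C2) (etrans hC1 (esym hC2)).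
have [gE [iE eE]] := bij_ex y0 (A := e1) (B := e2) (etrans h11 (esym h21)).
have [gF [iF eF]] := bij_ex y0 (A := f1) (B := f2) (etrans h12 (esym h22)).
have dCE2 : [disjoint C2 & e2] by rewrite disjoint_sym.
have [h [ih hC' hE']] := glue dCE2 iC eC iE eE.
have hE'' : {in e1, h =1 gE}.
  by move=> x xe; apply: hE'; rewrite inE xe (disjointFr d11 xe).
have hCE : h @: (C1 :|: e1) = C2 :|: e2.
  by rewrite imsetU (eq_in_imset hC') (eq_in_imset hE'') eC eE.
have dCEF : [disjoint C2 :|: e2 & f2].
  apply/disjP => x /setUP [xC|xE] xF.
    by have := disjointFl d22 xC; rewrite xF.
  by have := disjointFr d212 xE; rewrite xF.
have [F [iFF FC' FF']] := glue dCEF ih hCE iF eF.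
have FF'' : {in f1, F =1 gF}.
  move=> x xf; apply: FF'; rewrite !inE xf andbT.
  by rewrite (disjointFr d12 xf) (disjointFl d112 xf).
have FC : F @: C1 = C2.
  rewrite -eC -(eq_in_imset hC'); apply: eq_in_imset => x xC; apply: FC'.
  by rewrite inE xC.
have FE : F @: e1 = e2.
  rewrite -eE -(eq_in_imset hE''); apply: eq_in_imset => x xE; apply: FC'.
  by rewrite inE xE orbT.
have FFf : F @: f1 = f2 by rewrite -eF; apply: eq_in_imset.
have V1 := vertices_M hd hC1 h11 h12 d11 d12 d112 H1.
have V2 := vertices_M hd hC2 h21 h22 d21 d22 d212 H2.
exists F; rewrite V1 V2; split => //.
  by rewrite !imsetU FC FE FFf.
move=> E sE.
have sC : C1 \subset (C1 :|: e1) :|: f1 by rewrite -setUA subsetUl.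
have sE1 : e1 \subset (C1 :|: e1) :|: f1 by rewrite -setUA setUCA subsetUl.
have sF1 : f1 \subset (C1 :|: e1) :|: f1 by rewrite subsetUr.
rewrite H1 H2 /mM /rM /bM /Q1 /Q2.
rewrite (imset_pet iFF sC sE1 sE FC FE) (imset_pet iFF sC sF1 sE FC FFf).
by rewrite -FFf -FE !(imset_injV iFF sE).
Qed.

Lemma struct_of (T : finType) d (m : {set T} -> nat) : 2 <= d -> prim_ms_core d m ->
  exists C e1 e2 : {set T}, [/\ #|C| = d - 1,
    [/\ #|e1| = d, #|e2| = d, [disjoint e1 & C], [disjoint e2 & C] & [disjoint e1 & e2]]
    & forall E, m E = mM C e1 e2 E].
Proof.
move=> hd [pr [C [P [M [[hu hsupp hsf hcm _] hC]]]]].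
have [e1 [e2 [H mE _ _]]] := G_struct hd hu hsupp hsf hcm hC pr.
by exists C, e1, e2.
Qed.

Theorem mainTheorem9 (d : nat) (hd : 2 <= d) :
  (exists (T : finType) (m : {set T} -> nat), prim_ms_core d m) /\
  (forall (T1 T2 : finType) (m1 : {set T1} -> nat) (m2 : {set T2} -> nat),
      prim_ms_core d m1 -> prim_ms_core d m2 -> mh_isomorphic m1 m2) /\
  (forall (T : finType) (m : {set T} -> nat) (C : {set T}) (P M : {set {set T}}),
      primitive m -> monomial_sunflower d m C P M -> #|C| = d - 1 ->
      [/\ #|ms_support m| = 2 * d + 2, #|P| = 2 * d, #|M| = 2
        & forall E, E \in ms_support m -> m E = 1]).
Proof.
split; [|split].
- pose T := ('I_(d-1) + ('I_d + 'I_d))%type.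
  pose C : {set T} := [set inl i | i in [set: 'I_(d-1)]].
  pose e1 : {set T} := [set inr (inl i) | i in [set: 'I_d]].
  pose e2 : {set T} := [set inr (inr i) | i in [set: 'I_d]].
  exists T, (mM C e1 e2); apply: prim_core_M => //.
  + by rewrite card_imset ?cardsT ?card_ord // => a b [].
  + by rewrite card_imset ?cardsT ?card_ord // => a b [].
  + by rewrite card_imset ?cardsT ?card_ord // => a b [].
  + by apply/disjP => x /imsetP [a _ ->] /imsetP [b _ e].
  + by apply/disjP => x /imsetP [a _ ->] /imsetP [b _ e].
  + by apply/disjP => x /imsetP [a _ ->] /imsetP [b _ e].
- move=> T1 T2 m1 m2 /(struct_of hd) [C1 [e1 [f1 [hC1 [h11 h12 d11 d12 d112] H1]]]].
  move=> /(struct_of hd) [C2 [e2 [f2 [hC2 [h21 h22 d21 d22 d212] H2]]]].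
  exact: (iso_M hd hC1 h11 h12 d11 d12 d112 hC2 h21 h22 d21 d22 d212 H1 H2).
- move=> T m C P M pr [hu hsupp hsf hcm bb] hC.
  have [e1 [e2 [[h1 h2 d1 d2 d12] mE eP eM]]] := G_struct hd hu hsupp hsf hcm hC pr.
  have dPM : [disjoint P & M].
    by apply/disjP => E EP EM; exact: (G_PM hd hu hsupp hsf hcm hC EP EM).
  have cP : #|P| = 2 * d.
    rewrite eP cardU_disj ?(dQ hd hC h1 h2 d1 d2 d12) //.
    rewrite (card_Q1 hd hC h1 h2 d1 d2 d12) (card_Q2 hd hC h1 h2 d1 d2 d12); lia.
  have cM : #|M| = 2 by rewrite eM cards2 (e12 hd hC h1 h2 d1 d2 d12).
  split => //.
  + by rewrite hsupp cardU_disj // cP cM.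
  + move=> E ES; rewrite mE; apply: (mM_1 hd hC h1 h2 d1 d2 d12).
    by rewrite -(mM_supp hd hC h1 h2 d1 d2 d12) -mE; rewrite inE in ES.
Qed.
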